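(* Let $k\geq 0$ be an integer and let $G$ be a graph all of whose internal vertices are of type $0$ or $1$, such that $G_0$ is non-null, and let $n_0$ be the maximum number of vertices of a connected component of $G_0$. Then $\mu_\alpha(G)\leq k$ if and only if $\mu_\alpha(G_0)\leq k$ and for every independent set $I$ in $G_1$ of size at most $(k+1)n_0$ it holds that $\alpha(G_0)-i(G_0-N(I))\leq k$.
   Context: All graphs are finite and simple; the null graph (no vertices) is allowed. For a graph $H$, $\alpha(H)$ is the maximum size of an independent set, $i(H)$ the minimum size of an inclusion-maximal independent set (both $0$ for the null graph), and $\mu_\alpha(H)=\alpha(H)-i(H)$ is the independence gap. $N(I)=\bigcup_{v\in I}N(v)$ and $G_0-N(I)$ is obtained from $G_0$ by deleting the vertices of $N(I)$. Types of vertices: let $U$ be the set of vertices of $G$ whose connected component is a complete graph. In $G-U$, vertices of degree $1$ are leaves and the others are internal vertices. An internal vertex adjacent to exactly $k$ leaves is of type $k$; every vertex of $U$ is of type $0$. $G_i$ denotes the subgraph of $G$ induced by all vertices of type $i$. *)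

(* Defs.v *)
(* A simple graph is a symmetric irreflexive relation e on a
   finType T; induced subgraphs are represented by their vertex set S. *)
From mathcomp Require Import all_boot.
Set Implicit Arguments. Unset Strict Implicit. Unset Printing Implicit Defensive.

Section Graphs.
Variables (T : finType) (e : rel T).

Definition indep (S A : {set T}) : bool :=
  (A \subset S) && [forall x in A, forall y in A, ~~ e x y].

Definition maxindep (S A : {set T}) : bool :=
  indep S A && [forall v in S :\: A, exists u in A, e v u].

Definition alpha (S : {set T}) : nat := \max_(A : {set T} | indep S A) #|A|.

(* i(G[S]) : minimum size of a maximal independent set; the default value #|T|
   is never attained strictly since maximal independent sets always exist and
   have size <= #|T|. For S = set0 only A = set0 qualifies, giving 0. *)
Definition imin (S : {set T}) : nat :=
  \big[minn/#|T|]_(A : {set T} | maxindep S A) #|A|.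

Definition mu_alpha (S : {set T}) : nat := alpha S - imin S.

Definition nbhd (I : {set T}) : {set T} := [set u | [exists v in I, e v u]].

Definition compG (v : T) : {set T} := [set u | connect e v u].

Definition Uset : {set T} :=
  [set v | [forall x in compG v, forall y in compG v, (x != y) ==> e x y]].

Definition degGU (v : T) : nat := #|[set u | e v u & u \notin Uset]|.

Definition is_leaf (v : T) : bool := (v \notin Uset) && (degGU v == 1).
Definition is_internal (v : T) : bool := (v \notin Uset) && (degGU v != 1).

Definition nleaves (v : T) : nat := #|[set u | e v u & is_leaf u]|.

Definition typeset (k : nat) : {set T} :=
  [set v | (is_internal v && (nleaves v == k)) || ((k == 0) && (v \in Uset))].

Definition induced_rel (S : {set T}) : rel T :=
  [rel x y | e x y && (x \in S) && (y \in S)].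

Definition comp_in (S : {set T}) (v : T) : {set T} :=
  [set u | connect (induced_rel S) v u].

Definition max_comp_size (S : {set T}) : nat := \max_(v in S) #|comp_in S v|.

End Graphs.

(* Main.v *)
Require Import Defs.
From mathcomp Require Import all_boot zify.
Set Implicit Arguments. Unset Strict Implicit. Unset Printing Implicit Defensive.

Lemma connect_sub_closed (T : finType) (r : rel T) (X : {set T}) x y :
  (forall a b, r a b -> a \in X -> b \in X) -> connect r x y -> x \in X -> y \in X.
Proof.
move=> cl /connectP [p pth ->]; elim: p x pth => [|z p IH] x //= /andP [rxz pth] xX.
by apply: IH pth _; apply: cl rxz xX.
Qed.

Lemma indepP (T : finType) (e : rel T) (S A : {set T}) :
  reflect (A \subset S /\ forall x y, x \in A -> y \in A -> ~~ e x y) (indep e S A).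
Proof.
apply: (iffP andP) => [[sAS /forallP H]|[sAS H]]; split => //.
  by move=> x y xA yA; move: (H x); rewrite xA /= => /forallP /(_ y); rewrite yA.
by apply/forall_inP => x xA; apply/forall_inP => y yA; apply: H.
Qed.

Lemma indep_sub (T : finType) (e : rel T) (S S' A B : {set T}) :
  indep e S A -> B \subset A -> A \subset S' -> indep e S' B.
Proof.
move=> /indepP [_ H] sBA sAS'; apply/indepP; split; first exact: subset_trans sBA sAS'.
by move=> x y xB yB; apply: H; apply: (subsetP sBA).
Qed.

Lemma indep0 (T : finType) (e : rel T) (S : {set T}) : indep e S set0.
Proof. by apply/indepP; split; [apply: sub0set | move=> x y; rewrite inE]. Qed.

Lemma alpha_ge (T : finType) (e : rel T) (S A : {set T}) : indep e S A -> #|A| <= alpha e S.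
Proof. by move=> H; rewrite /alpha; apply: (@leq_bigmax_cond _ (fun B : {set T} => indep e S B) (fun B : {set T} => #|B|)). Qed.

Lemma alpha_wit (T : finType) (e : rel T) (S : {set T}) : exists2 A, indep e S A & #|A| = alpha e S.
Proof.
have : 0 < #|[pred A | indep e S A]|.
  by apply/card_gt0P; exists set0; rewrite inE indep0.
move/(eq_bigmax_cond (fun A : {set T} => #|A|)) => [A]; rewrite inE => HA Heq.
by exists A => //; rewrite /alpha Heq.
Qed.

Lemma alpha_mono (T : finType) (e : rel T) (S S' : {set T}) : S \subset S' -> alpha e S <= alpha e S'.
Proof.
move=> sS; have [A HA cA] := alpha_wit e S; rewrite -cA; apply: alpha_ge.
have sAS : A \subset S' by case/andP: HA => H _; apply: subset_trans H sS.
exact: (indep_sub HA (subxx _) sAS).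
Qed.

Lemma imin_le (T : finType) (e : rel T) (S A : {set T}) : maxindep e S A -> imin e S <= #|A|.
Proof.
move=> H; rewrite /imin; have : A \in index_enum {set T} by rewrite mem_index_enum.
elim: (index_enum _) => [|B r IH] //=; rewrite big_cons inE => /orP [/eqP <- | Br].
  by rewrite H geq_minl.
case: ifP => _; last exact: IH.
by rewrite geq_min IH ?orbT.
Qed.

Lemma maxindepP (T : finType) (e : rel T) (S A : {set T}) :
  reflect (indep e S A /\ forall v, v \in S -> v \notin A -> exists2 u, u \in A & e v u)
          (maxindep e S A).
Proof.
apply: (iffP andP) => [[HA /forall_inP H]|[HA H]]; split => //.
  move=> v vS vA; have vSA : v \in S :\: A by rewrite inE vA.
  have /exists_inP [u uA evu] := H v vSA.
  by exists u.
apply/forall_inP => v; rewrite inE => /andP [vA vS].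
by have [u uA evu] := H v vS vA; apply/exists_inP; exists u.
Qed.

Lemma maxindep_exists (T : finType) (e : rel T) (e_sym : symmetric e) (e_irr : irreflexive e) (S : {set T}) :
  exists A, maxindep e S A.
Proof.
have [A HA cA] := alpha_wit e S; exists A; apply/maxindepP; split => // v vS vA.
apply/exists_inP; apply: contraT; rewrite negb_exists_in => /forall_inP H.
have : indep e S (v |: A).
  move/indepP: HA => [sAS HA]; apply/indepP; split.
    by rewrite subUset sub1set vS.
  move=> x y; rewrite !in_setU1 => /orP [/eqP -> | xA] /orP [/eqP -> | yA].
  - by rewrite e_irr.
  - by apply: H.
  - by rewrite e_sym; apply: H.
  - by apply: HA.
move/alpha_ge; rewrite cardsU1 vA -cA; lia.
Qed.

Lemma imin_wit (T : finType) (e : rel T) (e_sym : symmetric e) (e_irr : irreflexive e) (S : {set T}) :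
  exists2 A, maxindep e S A & #|A| = imin e S.
Proof.
have [A0 H0] := maxindep_exists e_sym e_irr S.
have : imin e S = #|T| \/ exists2 A, maxindep e S A & #|A| = imin e S.
  rewrite /imin; apply: (big_ind (fun n => n = #|T| \/ exists2 A, maxindep e S A & #|A| = n)).
  - by left.
  - move=> a b Ha Hb; rewrite /minn; by case: ifP.
  - by move=> A HA; right; exists A.
case=> // Heq; exists A0 => //.
have h1 := imin_le H0; have h2 : #|A0| <= #|T| by apply: max_card.
rewrite Heq in h1 *; apply/eqP; rewrite eqn_leq h2 h1.
by [].
Qed.

Lemma indep_sub2 (T : finType) (e : rel T) (S S' A B : {set T}) :
  indep e S A -> B \subset A -> B \subset S' -> indep e S' B.
Proof.
move=> /indepP [_ H] sBA sBS'; apply/indepP; split => //.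
by move=> x y xB yB; apply: H; apply: (subsetP sBA).
Qed.

Lemma nonU_nb (T : finType) (e : rel T) (e_sym : symmetric e) x y :
  x \notin Uset e -> e x y -> y \notin Uset e.
Proof.
move=> xU exy; apply: contra xU; rewrite !inE => /forall_inP H.
have cyx : connect e y x by apply: connect1; rewrite e_sym.
apply/forall_inP => a; rewrite inE => xa; apply/forall_inP => b; rewrite inE => xb.
have ya : a \in compG e y by rewrite inE (connect_trans cyx xa).
have yb : b \in compG e y by rewrite inE (connect_trans cyx xb).
by have /forall_inP := H a ya; apply.
Qed.

Lemma leaf_nbs (T : finType) (e : rel T) (e_sym : symmetric e) x :
  is_leaf e x -> exists y, [set u | e x u] = [set y].
Proof.
case/andP => xU /cards1P [y Hy]; exists y; rewrite -Hy; apply/setP => u; rewrite !inE.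
case exu: (e x u) => //=.
by have := nonU_nb e_sym xU exu; rewrite inE => ->.
Qed.

Lemma leaf_uniq (T : finType) (e : rel T) (e_sym : symmetric e) x y z :
  is_leaf e x -> e x y -> e x z -> y = z.
Proof.
move=> /(leaf_nbs e_sym) [w Hw] exy exz.
have : y \in [set u | e x u] by rewrite inE.
have : z \in [set u | e x u] by rewrite inE.
by rewrite Hw !inE => /eqP -> /eqP ->.
Qed.

Lemma leaf_ex (T : finType) (e : rel T) (e_sym : symmetric e) x :
  is_leaf e x -> exists y, e x y.
Proof.
move=> /(leaf_nbs e_sym) [w Hw]; exists w.
have : w \in [set w] by rewrite inE.
by rewrite -Hw inE.
Qed.

Lemma leaf_par (T : finType) (e : rel T) (e_sym : symmetric e)
  (types01 : forall v : T, is_internal e v -> nleaves e v = 0 \/ nleaves e v = 1) x y :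
  is_leaf e x -> e x y -> y \in typeset e 1.
Proof.
move=> lx exy; have xU : x \notin Uset e by case/andP: lx.
have yU := nonU_nb e_sym xU exy.
have ly : ~~ is_leaf e y.
  apply/negP => ly; apply/negP: xU; rewrite negbK inE.
  have eyx : e y x by rewrite e_sym.
  have cl : forall a b, e a b -> a \in [set x; y] -> b \in [set x; y].
    move=> a b eab; rewrite !inE => /orP [/eqP Ha | /eqP Ha]; subst a.
      by rewrite (leaf_uniq e_sym lx eab exy) eqxx orbT.
    by rewrite (leaf_uniq e_sym ly eab eyx) eqxx.
  have sub : forall a, a \in compG e x -> a \in [set x; y].
    move=> a; rewrite inE => cxa; apply: (connect_sub_closed cl cxa).
    by rewrite !inE eqxx.
  apply/forall_inP => a /sub; rewrite !inE => Ha; apply/forall_inP => b /sub.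
  rewrite !inE => Hb; apply/implyP => ab.
  case/orP: Ha => /eqP Ha; case/orP: Hb => /eqP Hb; subst a b => //;
    by rewrite ?eqxx in ab.
have yi : is_internal e y.
  by move: ly; rewrite /is_leaf /is_internal yU.
have : 0 < nleaves e y.
  by apply/card_gt0P; exists x; rewrite inE -e_sym exy lx.
rewrite inE yi /=; case: (types01 y yi) => -> //.
Qed.

Lemma inV1 (T : finType) (e : rel T) v :
  (v \in typeset e 1) = is_internal e v && (nleaves e v == 1).
Proof. by rewrite inE orbF. Qed.

Lemma inV0 (T : finType) (e : rel T) v :
  (v \in typeset e 0) = is_internal e v && (nleaves e v == 0) || (v \in Uset e).
Proof. by rewrite inE. Qed.

Lemma V1_notV0 (T : finType) (e : rel T) v : v \in typeset e 1 -> v \notin typeset e 0.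
Proof.
rewrite inV1 inV0 => /andP [vi /eqP Hn]; rewrite Hn /= andbF /=.
by move: vi; rewrite /is_internal => /andP [].
Qed.

Lemma leaf_notV0 (T : finType) (e : rel T) v : is_leaf e v -> v \notin typeset e 0.
Proof.
rewrite inV0 /is_leaf /is_internal => /andP [vU H1]; rewrite H1 /= andbF /=; exact: vU.
Qed.

Lemma leaf_notV1 (T : finType) (e : rel T) v : is_leaf e v -> v \notin typeset e 1.
Proof. by rewrite inV1 /is_leaf /is_internal => /andP [vU H1]; rewrite H1 andbF. Qed.

Lemma partition3 (T : finType) (e : rel T)
  (types01 : forall v : T, is_internal e v -> nleaves e v = 0 \/ nleaves e v = 1) v :
  v \notin typeset e 0 -> v \notin typeset e 1 -> is_leaf e v.
Proof.
rewrite inV0 inV1 negb_or => /andP [H0 vU] H1.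
case vi : (is_internal e v).
  by case: (types01 v vi) => Hn; [move: H0 | move: H1]; rewrite vi Hn.
by move: vi; rewrite /is_internal /is_leaf vU /= => /negbFE.
Qed.

Definition lf (T : finType) (e : rel T) (v : T) : T := odflt v [pick u | e v u && is_leaf e u].

Lemma lf_spec (T : finType) (e : rel T) v :
  v \in typeset e 1 -> e v (lf e v) && is_leaf e (lf e v).
Proof.
rewrite inV1 => /andP [_ /eqP Hn]; rewrite /lf; case: pickP => [u //|H].
have : 0 < nleaves e v by rewrite Hn.
by move/card_gt0P => [u]; rewrite inE H.
Qed.

Lemma lf_uniq (T : finType) (e : rel T) v u :
  v \in typeset e 1 -> e v u -> is_leaf e u -> u = lf e v.
Proof.
move=> vV1 evu lu; have /andP [evl ll] := lf_spec vV1.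
move: vV1; rewrite inV1 => /andP [_ /cards1P [w Hw]].
have : u \in [set w] by rewrite -Hw inE evu lu.
have : lf e v \in [set w] by rewrite -Hw inE evl ll.
by rewrite !inE => /eqP -> /eqP ->.
Qed.

Lemma V0_noleaf (T : finType) (e : rel T) (e_sym : symmetric e)
  (types01 : forall v : T, is_internal e v -> nleaves e v = 0 \/ nleaves e v = 1) v u :
  v \in typeset e 0 -> e v u -> ~~ is_leaf e u.
Proof.
move=> vV0 evu; apply/negP => lu.
have euv : e u v by rewrite e_sym.
have := leaf_par e_sym types01 lu euv => /V1_notV0.
by rewrite vV0.
Qed.

Definition closed0 (T : finType) (e : rel T) (V0 X : {set T}) : Prop :=
  X \subset V0 /\ forall x y, x \in X -> y \in V0 -> e x y -> y \in X.

Lemma comp_facts (T : finType) (e : rel T) (e_sym : symmetric e) (V0 : {set T}) x :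
  x \in V0 ->
  [/\ x \in comp_in e V0 x, closed0 e V0 (comp_in e V0 x),
      (forall X, closed0 e V0 X -> x \in X -> comp_in e V0 x \subset X) &
      #|comp_in e V0 x| <= max_comp_size e V0].
Proof.
move=> xV0.
have sub : forall y, connect (induced_rel e V0) x y -> y \in V0.
  move=> y cxy; apply: (connect_sub_closed _ cxy xV0).
  by move=> a b /andP [/andP [_ _] bV].
split.
- by rewrite inE connect0.
- split.
    by apply/subsetP => y; rewrite inE => /sub.
  move=> a b; rewrite !inE => cxa bV eab; apply: (connect_trans cxa); apply: connect1.
  by rewrite /induced_rel /= eab bV (sub _ cxa).
- move=> X [sXV clX] xX; apply/subsetP => y; rewrite inE => cxy.
  apply: (connect_sub_closed _ cxy xX) => a b /andP [/andP [eab aV] bV] aX.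
  exact: clX eab.
- rewrite /max_comp_size.
  exact: (@leq_bigmax_cond _ (fun v => v \in V0) (fun v => #|comp_in e V0 v|)).
Qed.

Lemma alpha_split (T : finType) (e : rel T) (X C : {set T}) :
  alpha e X <= alpha e C + alpha e (X :\: C).
Proof.
have [A HA <-] := alpha_wit e X.
rewrite -(cardsID C A).
have h1 : indep e C (A :&: C).
  exact: (indep_sub2 HA (subsetIl _ _) (subsetIr _ _)).
have h2 : indep e (X :\: C) (A :\: C).
  apply: (indep_sub2 HA (subsetDl _ _)).
  by case/andP: HA => sAX _; apply: setSD.
by apply: leq_add; apply: alpha_ge.
Qed.

Lemma alpha_union (T : finType) (e : rel T) (e_sym : symmetric e) (A B : {set T}) :
  A :&: B = set0 -> (forall a b, a \in A -> b \in B -> ~~ e a b) ->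
  alpha e A + alpha e B <= alpha e (A :|: B).
Proof.
move=> dAB noE.
have [X HX <-] := alpha_wit e A; have [Y HY <-] := alpha_wit e B.
move/indepP: HX => [sXA HX]; move/indepP: HY => [sYB HY].
have dXY : X :&: Y = set0.
  apply/setP => z; rewrite !inE; apply/negP => /andP [zX zY].
  have := noE z z (subsetP sXA z zX) (subsetP sYB z zY).
  have : z \in A :&: B by rewrite inE (subsetP sXA z zX) (subsetP sYB z zY).
  by rewrite dAB inE.
have -> : #|X| + #|Y| = #|X :|: Y| by rewrite cardsU dXY cards0 subn0.
apply: alpha_ge; apply/indepP; split; first exact: setUSS.
move=> x y; rewrite !inE => /orP [xX|xY] /orP [yX|yY].
- exact: HX.
- exact: noE (subsetP sXA x xX) (subsetP sYB y yY).
- by rewrite e_sym; exact: noE (subsetP sXA y yX) (subsetP sYB x xY).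
- exact: HY.
Qed.

Lemma alpha0 (T : finType) (e : rel T) : alpha e set0 = 0.
Proof.
have [A HA <-] := alpha_wit e set0; apply/eqP; rewrite cards_eq0.
by case/andP: HA; rewrite subset0.
Qed.

Lemma deficit (T : finType) (e : rel T) (e_sym : symmetric e) (V0 M : {set T}) :
  (forall x y, x \in M -> y \in M -> ~~ e x y) ->
  forall n (X : {set T}) j, #|X| <= n -> closed0 e V0 X ->
  #|M :&: X| + j <= alpha e X ->
  exists W : {set T}, [/\ closed0 e V0 W, W \subset X,
     #|W| <= j * max_comp_size e V0 & #|M :&: W| + j <= alpha e W].
Proof.
move=> Mind; elim=> [|n IH] X j cX clX Hj.
  move: cX; rewrite leqn0 cards_eq0 => /eqP X0; subst X.
  move: Hj; rewrite alpha0 => Hj; have -> : j = 0 by lia.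
  exists set0; split; [split; [apply: sub0set | by move=> ? ?; rewrite inE] | apply: sub0set | by rewrite cards0 | by rewrite setI0 cards0 alpha0].
case: j Hj => [|j] Hj.
  exists set0; split; [split; [apply: sub0set | by move=> ? ?; rewrite inE] | apply: sub0set | by rewrite cards0 | by rewrite setI0 cards0 alpha0].
case: (set_0Vmem X) => [X0|[x xX]].
  by move: Hj; rewrite X0 alpha0; lia.
have [sXV clXX] := clX.
have xV0 : x \in V0 by apply: (subsetP sXV).
set C := comp_in e V0 x.
have [xC clC sCX cC] := comp_facts e_sym xV0.
have sCXp := sCX X clX xX.
have clXp : closed0 e V0 (X :\: C).
  split; first by apply: subset_trans (subsetDl _ _) sXV.
  move=> a b; rewrite !in_setD => /andP [aC aX] bV eab; rewrite (clXX a b aX bV eab) andbT.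
  apply/negP => bC; case: clC => _ /(_ b a bC (subsetP sXV a aX)).
  by rewrite e_sym eab (negbTE aC) => /(_ isT).
have cXp : #|(X :\: C)| <= n.
  have : #|(X :\: C)| < #|X|.
    by rewrite -(cardsID C X) -addn1 addnC leq_add2r card_gt0; apply/set0Pn; exists x; rewrite inE xX.
  lia.
have hsplit := alpha_split e X C.
have hMC : #|M :&: C| <= alpha e C.
  apply: alpha_ge; apply/indepP; split; first exact: subsetIr.
  by move=> a b; rewrite !inE => /andP [aM _] /andP [bM _]; apply: Mind.
have hMX : #|M :&: X| = #|M :&: C| + #|M :&: (X :\: C)|.
  have E1 : M :&: X :&: C = M :&: C.
    apply/setP => z; rewrite !in_setI.
    by case zC: (z \in C); rewrite ?andbF ?andbT //= (subsetP sCXp z zC) andbT.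
  have E2 : M :&: X :\: C = M :&: (X :\: C).
    apply/setP => z; rewrite !in_setD !in_setI.
    rewrite in_setD; by case: (z \in C); case: (z \in M).
  by have := cardsID C (M :&: X); rewrite E1 E2.
have hMXp : #|M :&: (X :\: C)| <= alpha e (X :\: C).
  apply: alpha_ge; apply/indepP; split; first exact: subsetIr.
  by move=> a b; rewrite !in_setI => /andP [aM _] /andP [bM _]; apply: Mind.
have Hj' : #|M :&: (X :\: C)| + (j.+1 - (alpha e C - #|M :&: C|)) <= alpha e (X :\: C) by lia.
have [W' [clW' sW'Xp cW' HW']] := IH (X :\: C) (j.+1 - (alpha e C - #|M :&: C|)) cXp clXp Hj'.
have sW'X : W' \subset X by apply: subset_trans sW'Xp (subsetDl _ _).
case d0 : (alpha e C - #|M :&: C| == 0).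
  move/eqP: d0 => d0; rewrite d0 subn0 in cW' HW'.
  by exists W'; split.
have [sW'V clW'W'] := clW'.
have noE : forall a b, a \in W' -> b \in C -> ~~ e a b.
  move=> a b aW bC; apply/negP => eab.
  have := subsetP sW'Xp a aW; rewrite inE => /andP [aC _].
  case: clC => _ /(_ b a bC (subsetP sW'V a aW)); rewrite e_sym eab => /(_ isT).
  by rewrite (negbTE aC).
have dW'C : W' :&: C = set0.
  apply/setP => z; rewrite in_setI in_set0; apply/negP => /andP [zW zC].
  by have := subsetP sW'Xp z zW; rewrite in_setD zC.
have hU := alpha_union e_sym dW'C noE.
exists (W' :|: C); split.
- split; first by rewrite subUset sW'V; case: clC.
  move=> a b; rewrite !in_setU => /orP [aW|aC] bV eab.
    by rewrite (clW'W' a b aW bV eab).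
  by case: clC => _ /(_ a b aC bV eab) ->; rewrite orbT.
- by rewrite subUset sW'X.
- have hc : #|W' :|: C| <= #|W'| + #|C| by rewrite cardsU leq_subr.
  have : (j.+1 - (alpha e C - #|M :&: C|)) * max_comp_size e V0 + max_comp_size e V0 <= j.+1 * max_comp_size e V0.
    rewrite -mulSnr leq_mul2r; apply/orP; right; move/negbT: d0; lia.
  move=> h; apply: leq_trans hc _; apply: leq_trans h; exact: leq_add.
- have -> : #|M :&: (W' :|: C)| = #|M :&: W'| + #|M :&: C|.
    rewrite setIUr cardsU; have -> : M :&: W' :&: (M :&: C) = set0.
      by rewrite setIACA setIid dW'C setI0.
    by rewrite cards0 subn0.
  lia.
Qed.

Lemma nbhdP (T : finType) (e : rel T) (I : {set T}) u :
  reflect (exists2 v, v \in I & e v u) (u \in nbhd e I).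
Proof. by rewrite inE; apply: (iffP exists_inP) => [[v]|[v]]; exists v. Qed.

Lemma construct (T : finType) (e : rel T) (e_sym : symmetric e) (e_irr : irreflexive e)
  (V0 I M : {set T}) k :
  maxindep e (V0 :\: nbhd e I) M -> #|M| + k.+1 <= alpha e V0 ->
  exists I' : {set T}, [/\ I' \subset I, #|I'| <= k.+1 * max_comp_size e V0 &
                   imin e (V0 :\: nbhd e I') + k.+1 <= alpha e V0].
Proof.
move=> /maxindepP [/indepP [sM Mind] Mmax] Hk.
have sMV : M \subset V0 by apply: subset_trans sM (subsetDl _ _).
have clV : closed0 e V0 V0 by split => // x y _ ->.
have MV : M :&: V0 = M by apply/setIidPl.
have Hk' : #|M :&: V0| + k.+1 <= alpha e V0 by rewrite MV.
have [W [clW sWV cW HW]] := deficit e_sym Mind (leqnn #|V0|) clV Hk'.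
pose f w := odflt w [pick v in I | e v w].
have fP : forall w, w \in nbhd e I -> f w \in I /\ e (f w) w.
  move=> w /nbhdP [v vI evw]; rewrite /f; case: pickP => [u /andP [] //|H].
  by have := H v; rewrite vI evw.
pose I' := [set f w | w in W :&: nbhd e I].
have sI' : I' \subset I.
  by apply/subsetP => z /imsetP [w]; rewrite in_setI => /andP [_ /fP [? _]] ->.
have nI'I : nbhd e I' \subset nbhd e I.
  apply/subsetP => u /nbhdP [v vI' evu]; apply/nbhdP; exists v => //.
  exact: (subsetP sI').
have nWI : forall w, w \in W -> w \in nbhd e I -> w \in nbhd e I'.
  move=> w wW wN; apply/nbhdP; exists (f w); last by case: (fP w wN).
  by apply/imsetP; exists w => //; rewrite in_setI wW.
have cI' : #|I'| <= #|W|.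
  apply: leq_trans (leq_imset_card _ _) _; apply: subset_leq_card; exact: subsetIl.
have [M2 HM2] := maxindep_exists e_sym e_irr ((V0 :\: W) :\: nbhd e I').
move/maxindepP: (HM2) => [/indepP [sM2 M2ind] M2max].
have [sWV0 clWW] := clW.
pose M' := (M :&: W) :|: M2.
have HM' : maxindep e (V0 :\: nbhd e I') M'.
  apply/maxindepP; split.
    apply/indepP; split.
      rewrite subUset; apply/andP; split.
        apply/subsetP => z; rewrite in_setI => /andP [zM zW].
        have := subsetP sM z zM; rewrite !in_setD => /andP [zN zV]; rewrite zV andbT.
        by apply: contra zN; apply: (subsetP nI'I).
      by apply: subset_trans sM2 _; apply: setSD; apply: subsetDl.
    have noE : forall a b, a \in M :&: W -> b \in M2 -> ~~ e a b.
      move=> a b; rewrite in_setI => /andP [aM aW] bM2; apply/negP => eab.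
      have := subsetP sM2 b bM2; rewrite !in_setD => /andP [_ /andP [bW bV]].
      by rewrite (clWW a b aW bV eab) in bW.
    move=> x y; rewrite !in_setU => /orP [xA|xB] /orP [yA|yB].
    - by move: xA yA; rewrite !in_setI => /andP [xM _] /andP [yM _]; apply: Mind.
    - exact: noE.
    - by rewrite e_sym; apply: noE.
    - exact: M2ind.
  move=> v; rewrite in_setD => /andP [vN vV]; rewrite in_setU negb_or => /andP [vMW vM2].
  case vW : (v \in W).
    have vNI : v \notin nbhd e I by apply: contra vN; apply: nWI.
    have vM : v \notin M by apply: contra vMW => vM; rewrite in_setI vM vW.
    have vS : v \in V0 :\: nbhd e I by rewrite in_setD vNI vV.
    have [u uM evu] := Mmax v vS vM.
    exists u => //; rewrite in_setU in_setI uM /=.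
    by rewrite (clWW v u vW (subsetP sMV u uM) evu).
  have vS : v \in (V0 :\: W) :\: nbhd e I' by rewrite !in_setD vN vW vV.
  have [u uM2 evu] := M2max v vS vM2.
  by exists u => //; rewrite in_setU uM2 orbT.
have h1 := imin_le HM'.
have h2 : #|M'| <= #|M :&: W| + #|M2| by rewrite cardsU leq_subr.
have h3 : #|M2| <= alpha e (V0 :\: W).
  apply: leq_trans (alpha_ge (indep_sub2 (proj1 (andP HM2)) (subxx _) sM2)) _.
  by apply: alpha_mono; apply: subsetDl.
have dWV : W :&: (V0 :\: W) = set0.
  by apply/setP => z; rewrite in_setI in_setD in_set0; case: (z \in W).
have noE : forall a b, a \in W -> b \in V0 :\: W -> ~~ e a b.
  move=> a b aW; rewrite in_setD => /andP [bW bV]; apply/negP => eab.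
  by rewrite (clWW a b aW bV eab) in bW.
have h4 := alpha_union e_sym dWV noE.
have eV : W :|: (V0 :\: W) = V0.
  apply/setP => z; rewrite in_setU in_setD.
  by case zW: (z \in W); rewrite ?(subsetP sWV z zW).
rewrite eV in h4.
exists I'; split => //; first exact: leq_trans cI' cW.
lia.
Qed.

Lemma alphaT_ge (T : finType) (e : rel T) (e_sym : symmetric e)
  (types01 : forall v : T, is_internal e v -> nleaves e v = 0 \/ nleaves e v = 1) :
  #|typeset e 1| + alpha e (typeset e 0) <= alpha e [set: T].
Proof.
have [A HA cA] := alpha_wit e (typeset e 0).
move/indepP: (HA) => [sA Aind].
pose L := [set lf e v | v in typeset e 1].
have lfL : forall z, z \in L -> is_leaf e z.
  by move=> z /imsetP [v vV1 ->]; case/andP: (lf_spec vV1).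
have cL : #|L| = #|typeset e 1|.
  apply: card_in_imset => v w vV wV Heq.
  have /andP [evl ll] := lf_spec vV; have /andP [ewl _] := lf_spec wV.
  rewrite -Heq in ewl.
  by apply: (leaf_uniq e_sym ll); rewrite e_sym.
have dLA : L :&: A = set0.
  apply/setP => z; rewrite in_setI in_set0; apply/negP => /andP [zL zA].
  by have := leaf_notV0 (lfL z zL); rewrite (subsetP sA z zA).
have leafE : forall x y, is_leaf e x -> y \in L :|: A -> ~~ e x y.
  move=> x y lx; rewrite in_setU => /orP [yL|yA]; apply/negP => exy.
    by have := leaf_notV1 (lfL y yL); rewrite (leaf_par e_sym types01 lx exy).
  by have := V1_notV0 (leaf_par e_sym types01 lx exy); rewrite (subsetP sA y yA).
have : indep e [set: T] (L :|: A).
  apply/indepP; split; first exact: subsetT.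
  move=> x y xS yS; move: (xS) (yS); rewrite !in_setU => /orP [xL|xA].
    by move=> _; apply: leafE => //; apply: lfL.
  move=> /orP [yL|yA]; last exact: Aind.
  by rewrite e_sym; apply: leafE => //; apply: lfL.
move/alpha_ge; rewrite cardsU dLA cards0 subn0 cL cA //.
Qed.

Definition par (T : finType) (e : rel T) (x : T) : T := odflt x [pick u | e x u].

Lemma par_spec (T : finType) (e : rel T) (e_sym : symmetric e) x :
  is_leaf e x -> e x (par e x).
Proof.
move=> lx; rewrite /par; case: pickP => [u //|H].
by have [y exy] := leaf_ex e_sym lx; have := H y; rewrite exy.
Qed.

Lemma alphaT_le (T : finType) (e : rel T) (e_sym : symmetric e)
  (types01 : forall v : T, is_internal e v -> nleaves e v = 0 \/ nleaves e v = 1) :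
  alpha e [set: T] <= #|typeset e 1| + alpha e (typeset e 0).
Proof.
have [A HA <-] := alpha_wit e [set: T].
move/indepP: (HA) => [_ Aind].
rewrite -(cardsID (typeset e 0) A) addnC; apply: leq_add; last first.
  by apply: alpha_ge; apply: (indep_sub2 HA (subsetIl _ _) (subsetIr _ _)).
pose g x := if x \in typeset e 1 then x else par e x.
have gP : forall x, x \in A :\: typeset e 0 ->
    (x \in typeset e 1) || (is_leaf e x && (x \notin typeset e 1)).
  move=> x; rewrite in_setD => /andP [x0 _].
  case x1 : (x \in typeset e 1) => //=.
  by rewrite (partition3 types01 x0) // x1.
have gV1 : forall x, x \in A :\: typeset e 0 -> g x \in typeset e 1.
  move=> x /gP /orP [x1|/andP [lx x1]]; rewrite /g.
    by rewrite x1.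
  by rewrite (negbTE x1); apply: (leaf_par e_sym types01 lx); apply: par_spec.
have ginj : {in A :\: typeset e 0 &, injective g}.
  move=> x y xA yA; have xA' := xA; have yA' := yA.
  move: xA' yA'; rewrite !in_setD => /andP [_ xA''] /andP [_ yA''].
  move: (gP x xA) (gP y yA); rewrite /g.
  case/orP => [x1|/andP [lx x1]]; case/orP => [y1|/andP [ly y1]].
  - by rewrite x1 y1.
  - rewrite x1 (negbTE y1) => Heq; have := par_spec e_sym ly; rewrite -Heq => eyx.
    by have := Aind y x yA'' xA''; rewrite eyx.
  - rewrite y1 (negbTE x1) => Heq; have := par_spec e_sym lx; rewrite Heq => exy.
    by have := Aind x y xA'' yA''; rewrite exy.
  - rewrite (negbTE x1) (negbTE y1) => Heq.
    have p1 := leaf_par e_sym types01 lx (par_spec e_sym lx).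
    have epx : e (par e x) x by rewrite e_sym; apply: par_spec.
    have epy : e (par e x) y by rewrite Heq e_sym; apply: par_spec.
    by rewrite (lf_uniq p1 epx lx) (lf_uniq p1 epy ly).
rewrite -(card_in_imset ginj); apply: subset_leq_card.
by apply/subsetP => z /imsetP [x xA ->]; apply: gV1.
Qed.

Lemma iminT_le (T : finType) (e : rel T) (e_sym : symmetric e) (e_irr : irreflexive e)
  (types01 : forall v : T, is_internal e v -> nleaves e v = 0 \/ nleaves e v = 1)
  (I M : {set T}) :
  indep e (typeset e 1) I -> maxindep e (typeset e 0 :\: nbhd e I) M ->
  imin e [set: T] <= #|typeset e 1| + #|M|.
Proof.
move=> /indepP [sI Iind] /maxindepP [/indepP [sM Mind] Mmax].
pose L := [set lf e v | v in typeset e 1 :\: I].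
pose S := I :|: M :|: L.
have Lspec : forall z, z \in L -> exists v, [/\ v \in typeset e 1, v \notin I, z = lf e v,
     e z v & is_leaf e z].
  move=> z /imsetP [v]; rewrite in_setD => /andP [vI vV1] ->.
  have /andP [evl ll] := lf_spec vV1.
  by exists v; split => //; rewrite e_sym.
have M0 : forall z, z \in M -> z \in typeset e 0.
  by move=> z zM; have := subsetP sM z zM; rewrite in_setD => /andP [].
have leafE : forall x y, x \in L -> y \in S -> ~~ e x y.
  move=> x y /Lspec [v [vV1 vI -> elv ll]] yS; apply/negP => ely.
  have yv := leaf_uniq e_sym ll ely elv; subst y.
  move: yS; rewrite !in_setU (negbTE vI) /= => /orP [vM|vL].
    by have := V1_notV0 vV1; rewrite M0.
  by have [w [_ _ _ _ lw]] := Lspec _ vL; have := leaf_notV1 lw; rewrite vV1.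
have HS : maxindep e [set: T] S.
  apply/maxindepP; split.
    apply/indepP; split; first exact: subsetT.
    move=> x y xS yS; move: (xS) (yS); rewrite !in_setU.
    case/orP => [/orP [xI|xM]|xL]; last by move=> _; apply: leafE.
    + case/orP => [/orP [yI|yM]|yL]; last by rewrite e_sym; apply: leafE.
      * exact: Iind.
      * apply/negP => exy; have := subsetP sM y yM; rewrite in_setD => /andP [/nbhdP H _].
        by apply: H; exists x.
    + case/orP => [/orP [yI|yM]|yL]; last by rewrite e_sym; apply: leafE.
      * apply/negP => exy; have := subsetP sM x xM; rewrite in_setD => /andP [/nbhdP H _].
        by apply: H; exists y => //; rewrite e_sym.
      * exact: Mind.
  move=> v _ vS.
  case v0 : (v \in typeset e 0).
    case vN : (v \in nbhd e I).
      move/nbhdP: vN => [u uI euv]; exists u; last by rewrite e_sym.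
      by rewrite !in_setU uI.
    have vM : v \notin M by apply: contra vS; rewrite !in_setU => ->; rewrite orbT.
    have vD : v \in typeset e 0 :\: nbhd e I by rewrite in_setD vN v0.
    have [u uM evu] := Mmax v vD vM.
    by exists u => //; rewrite !in_setU uM orbT.
  case v1 : (v \in typeset e 1).
    have vI : v \notin I by apply: contra vS; rewrite !in_setU => ->.
    have /andP [evl ll] := lf_spec v1.
    exists (lf e v) => //; rewrite !in_setU; apply/orP; right.
    by apply/imsetP; exists v => //; rewrite in_setD vI v1.
  have lv : is_leaf e v by apply: (partition3 types01); rewrite ?v0 ?v1.
  have evp := par_spec e_sym lv.
  have p1 := leaf_par e_sym types01 lv evp.
  case pI : (par e v \in I).
    by exists (par e v) => //; rewrite !in_setU pI.
  have epv : e (par e v) v by rewrite e_sym.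
  have := lf_uniq p1 epv lv => vE.
  exfalso; move/negP: vS; apply; rewrite !in_setU; apply/orP; right.
  by apply/imsetP; exists (par e v) => //; rewrite in_setD pI p1.
apply: leq_trans (imin_le HS) _.
have cS : #|S| <= #|I| + #|M| + #|L|.
  apply: leq_trans (leq_card_setU _ _) _; rewrite leq_add2r; exact: leq_card_setU.
have cL : #|L| <= #|typeset e 1 :\: I| by apply: leq_imset_card.
have cV : #|typeset e 1 :&: I| + #|typeset e 1 :\: I| = #|typeset e 1| by apply: cardsID.
have EI : typeset e 1 :&: I = I by apply/setIidPr.
rewrite EI in cV.
lia.
Qed.

Lemma iminT_ge (T : finType) (e : rel T) (e_sym : symmetric e) (e_irr : irreflexive e)
  (types01 : forall v : T, is_internal e v -> nleaves e v = 0 \/ nleaves e v = 1)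
  (S : {set T}) : maxindep e [set: T] S ->
  exists I M : {set T}, [/\ indep e (typeset e 1) I, maxindep e (typeset e 0 :\: nbhd e I) M &
      #|typeset e 1| + #|M| <= #|S|].
Proof.
move=> HS; move/maxindepP: (HS) => [/indepP [_ Sind] Smax].
exists (S :&: typeset e 1), (S :&: typeset e 0); split.
- apply: (indep_sub2 (proj1 (andP HS)) (subsetIl _ _) (subsetIr _ _)).
- apply/maxindepP; split.
    apply/indepP; split.
      apply/subsetP => z; rewrite in_setI => /andP [zS z0]; rewrite in_setD z0 andbT.
      apply/nbhdP => [[v]]; rewrite in_setI => /andP [vS _] evz.
      by have := Sind v z vS zS; rewrite evz.
    by move=> x y; rewrite !in_setI => /andP [xS _] /andP [yS _]; apply: Sind.
  move=> v; rewrite in_setD => /andP [vN v0]; rewrite in_setI v0 andbT => vS.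
  have [u uS evu] := Smax v (in_setT v) vS.
  exists u => //; rewrite in_setI uS /=.
  case u0 : (u \in typeset e 0) => //.
  case u1 : (u \in typeset e 1).
    by exfalso; move/negP: vN; apply; apply/nbhdP; exists u; rewrite ?in_setI ?uS // e_sym.
  have lu : is_leaf e u by apply: (partition3 types01); rewrite ?u0 ?u1.
  have euv : e u v by rewrite e_sym.
  by have := V1_notV0 (leaf_par e_sym types01 lu euv); rewrite v0.
- suff : #|typeset e 1| <= #|S :\: typeset e 0| by have := cardsID (typeset e 0) S; lia.
  pose h v := if v \in S then v else lf e v.
  have hS : forall v, v \in typeset e 1 -> h v \in S :\: typeset e 0.
    move=> v v1; rewrite /h; case vS : (v \in S).
      by rewrite in_setD vS (negbTE (V1_notV0 v1)).
    have /andP [evl ll] := lf_spec v1.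
    rewrite in_setD (negbTE (leaf_notV0 ll)) /=.
    apply: contraFT vS => lS.
    have [u uS elu] := Smax _ (in_setT _) lS.
    have elv : e (lf e v) v by rewrite e_sym.
    by rewrite (leaf_uniq e_sym ll elv elu).
  have hinj : {in typeset e 1 &, injective h}.
    move=> v w v1 w1; rewrite /h.
    have /andP [evl ll] := lf_spec v1; have /andP [ewl lw] := lf_spec w1.
    case vS : (v \in S); case wS : (w \in S) => Heq //.
    + by have := leaf_notV1 lw; rewrite -Heq v1.
    + by have := leaf_notV1 ll; rewrite Heq w1.
    + have elv : e (lf e v) v by rewrite e_sym.
      have elw : e (lf e v) w by rewrite Heq e_sym.
      exact: (leaf_uniq e_sym ll elv elw).
  rewrite -(card_in_imset hinj); apply: subset_leq_card.
  by apply/subsetP => z /imsetP [v v1 ->]; apply: hS.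
Qed.

Theorem theorem9 (T : finType) (e : rel T) (k : nat)
  (e_sym : symmetric e) (e_irr : irreflexive e)
  (types01 : forall v : T, is_internal e v ->
                nleaves e v = 0 \/ nleaves e v = 1)
  (G0_nonnull : typeset e 0 != set0) :
  let V0 := typeset e 0 in
  let V1 := typeset e 1 in
  let n0 := max_comp_size e V0 in
  (mu_alpha e [set: T] <= k <->
   (mu_alpha e V0 <= k /\
    forall I : {set T}, indep e V1 I -> #|I| <= (k + 1) * n0 ->
      alpha e V0 - imin e (V0 :\: nbhd e I) <= k)).
Proof.
cbv zeta; rewrite /mu_alpha.
have aGe := alphaT_ge e_sym types01.
have aLe := alphaT_le e_sym types01.
split.
  move=> Hmu.
  have claim : forall I, indep e (typeset e 1) I ->
      alpha e (typeset e 0) - imin e (typeset e 0 :\: nbhd e I) <= k.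
    move=> I HI; have [M HM cM] := imin_wit e_sym e_irr (typeset e 0 :\: nbhd e I).
    have := iminT_le e_sym e_irr types01 HI HM; lia.
  split; last by move=> I HI _; apply: claim.
  have := claim set0 (indep0 _ _).
  have -> : nbhd e set0 = set0.
    by apply/setP => z; rewrite in_set0; apply/nbhdP => [[v]]; rewrite in_set0.
  by rewrite setD0.
move=> [_ H].
have [S HS cS] := imin_wit e_sym e_irr [set: T].
have [I [M [HI HM cM]]] := iminT_ge e_sym e_irr types01 HS.
have aM : alpha e (typeset e 0) <= #|M| + k.
  rewrite leqNgt; apply/negP => Hlt.
  have Hk : #|M| + k.+1 <= alpha e (typeset e 0) by lia.
  have [I' [sI' cI' Hi]] := construct e_sym e_irr HM Hk.
  have HI' : indep e (typeset e 1) I'.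
    by apply: (indep_sub2 HI sI'); apply: subset_trans sI' _; case/andP: HI.
  have := H I' HI'; rewrite addn1 => /(_ cI'); lia.
lia.
Qed.
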